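(* Let $k$ be a positive integer, $A\subseteq[k]$, and let $c_\alpha\in\mathbb{Z}$ for each $\alpha\in A$. Suppose that for all pairs $\alpha,\alpha'\in A$: (1) $\mathrm{lcm}(\alpha,\alpha')\in A$, and (2) $(c_{\alpha'}-c_\alpha)\cdot\mathrm{lcm}(\alpha,\alpha')\equiv 0\pmod k$. Then there exists $c\in\mathbb{Z}$ such that $(c-c_\alpha)\alpha\equiv 0\pmod k$ for all $\alpha\in A$.
   Context: $[k]=\{1,\dots,k\}$. *)

(* Defs.v *)
From mathcomp Require Import all_boot all_order all_algebra.

(* Main.v *)
Require Import Defs.
From mathcomp Require Import all_boot all_order all_algebra.
From mathcomp Require Import ring.
Import GRing.Theory Num.Theory.
Local Open Scope ring_scope.

Lemma key_dvd (k a y : nat) : (0 < k)%N ->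
  (k %| y * a)%N = (k %/ gcdn a k %| y)%N.
Proof.
move=> k0.
have g0 : (0 < gcdn a k)%N by rewrite gcdn_gt0 k0 orbT.
have kE : k = (k %/ gcdn a k * gcdn a k)%N by rewrite divnK // dvdn_gcdr.
apply/idP/idP => H.
- have H2 : (k %| y * gcdn a k)%N.
    by rewrite muln_gcdr dvdn_gcd H dvdn_mull.
  by rewrite -(@dvdn_pmul2r (gcdn a k)) // -kE.
- rewrite {1}kE; apply: (@dvdn_trans (y * gcdn a k)).
    by rewrite dvdn_pmul2r.
  by rewrite dvdn_mul // dvdn_gcdl.
Qed.

Lemma m_lcm (k a b : nat) :
  (gcdn (k %/ gcdn a k) (k %/ gcdn b k) %| k %/ gcdn (lcmn a b) k)%N.
Proof.
rewrite Order.NatDvd.meetUl.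
have hl : (lcmn (gcdn a k) (gcdn b k) %| k)%N by rewrite dvdn_lcm !dvdn_gcdr.
rewrite dvdn_divRL // muln_lcmr dvdn_lcm.
rewrite -!dvdn_divRL; [ | exact: dvdn_gcdr | exact: dvdn_gcdr].
by rewrite dvdn_gcdl dvdn_gcdr.
Qed.

Definition foldlcm (m : nat -> nat) (s : seq nat) :=
  foldr (fun i acc => lcmn (m i) acc) 1%N s.

Lemma gcd_foldr (m : nat -> nat) d y (s : seq nat) :
  (forall i, i \in s -> gcdn (m i) d %| y)%N -> (gcdn (foldlcm m s) d %| y)%N.
Proof.
elim: s => [|b s IH] H /=; first by rewrite gcd1n dvd1n.
rewrite Order.NatDvd.meetUl dvdn_lcm H ?mem_head //=.
by apply: IH => i hi; apply: H; rewrite in_cons hi orbT.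
Qed.

Lemma foldlcm_dvd (m : nat -> nat) (s : seq nat) i :
  i \in s -> (m i %| foldlcm m s)%N.
Proof.
elim: s => [|b s IH] //=; rewrite in_cons => /orP [/eqP -> | hi].
  exact: dvdn_lcml.
by apply: dvdn_trans (IH hi) _; apply: dvdn_lcmr.
Qed.

Lemma crt (m : nat -> nat) (r : nat -> int) (s : seq nat) :
  (forall i j, i \in s -> j \in s -> ((gcdn (m i) (m j))%:Z %| r i - r j)%Z) ->
  exists x : int, forall i, i \in s -> ((m i)%:Z %| x - r i)%Z.
Proof.
elim: s => [|b s IH] H; first by exists 0.
have [x Hx] : exists x : int, forall i, i \in s -> ((m i)%:Z %| x - r i)%Z.
  by apply: IH => i j hi hj; apply: H; rewrite in_cons ?hi ?hj orbT.
set M := foldlcm m s.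
have hg : ((gcdn M (m b))%:Z %| r b - x)%Z.
  rewrite dvdzE /=; apply: gcd_foldr => i hi.
  rewrite -[(_ %| _)%N]/(((gcdn (m i) (m b))%:Z %| r b - x)%Z).
  have -> : r b - x = (r b - r i) - (x - r i) by ring.
  apply: rpredB.
    by rewrite gcdnC; apply: H; rewrite in_cons ?hi ?eqxx ?orbT.
  apply: dvdz_trans (Hx i hi).
  by rewrite dvdzE /= dvdn_gcdl.
have [u [v Huv]] := Bezoutz M (m b).
have [q Hq] := dvdzP hg.
exists (x + q * u * M%:Z) => i; rewrite in_cons => /orP [/eqP -> | hi].
  have -> : x + q * u * M%:Z - r b
          = q * (u * M%:Z + v * (m b)%:Z) - (r b - x) - q * v * (m b)%:Z by ring.
  rewrite Huv Hq /gcdz /=.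
  have -> : q * (gcdn M (m b))%:Z - q * (gcdn M (m b))%:Z - q * v * (m b)%:Z
          = - (q * v) * (m b)%:Z by ring.
  by apply: dvdz_mull; rewrite dvdzz.
have -> : x + q * u * M%:Z - r i = (x - r i) + q * u * M%:Z by ring.
apply: rpredD; first exact: Hx.
by apply: dvdz_mull; rewrite dvdzE /=; apply: foldlcm_dvd.
Qed.

Theorem lemma3p10 (k : nat) (hk : (0 < k)%N) (A : pred nat)
  (hA : forall a : nat, a \in A -> (0 < a <= k)%N)
  (c : nat -> int)
  (hlcm : forall a a' : nat, a \in A -> a' \in A -> lcmn a a' \in A)
  (hc : forall a a' : nat, a \in A -> a' \in A ->
     ((c a' - c a) * (lcmn a a')%:Z = 0 %[mod k%:Z])%Z) :
  exists c0 : int, forall a : nat, a \in A ->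
     ((c0 - c a) * a%:Z = 0 %[mod k%:Z])%Z.
Proof.
pose s := [seq a <- iota 0 k.+1 | a \in A].
have sA : forall a, a \in s -> a \in A by move=> a; rewrite mem_filter => /andP [].
have As : forall a, a \in A -> a \in s.
  move=> a ha; rewrite mem_filter ha mem_iota /= add0n ltnS.
  by case/andP: (hA a ha).
pose m a := (k %/ gcdn a k)%N.
have [x Hx] : exists x : int, forall i, i \in s -> ((m i)%:Z %| x - c i)%Z.
  apply: crt => i j hi hj.
  have := hc j i (sA j hj) (sA i hi).
  rewrite mod0z => /dvdz_mod0P; rewrite dvdzE abszM /= key_dvd // => h.
  rewrite dvdzE /=; apply: dvdn_trans h.
  by rewrite gcdnC; apply: m_lcm.
exists x => a ha.
rewrite mod0z; apply/dvdz_mod0P; rewrite dvdzE abszM /= key_dvd //.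
by have := Hx a (As a ha); rewrite dvdzE.
Qed.
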